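(* Let $(X_i,T_i,\delta_i,\xi_i,\xi_i\nu_i)$, $i=1,\ldots,n$, be observations from the mixture cure model with partially known cure status (context), with distinct observed times $T_{(1)}<\cdots<T_{(n)}$ and concomitants $\delta_{[i]},\xi_{[i]},\nu_{[i]}$, and let $B_{h[i]}(x)\ge 0$ be the Nadaraya–Watson weights at a fixed covariate value $x$. Consider the local (kernel-weighted) likelihood of a subprobability distribution putting mass $P_i=P_i(x)\ge 0$ at $T_{(i)}$, $i=1,\dots,n$, with $\sum_i P_i\le 1$ and remaining mass $1-\sum_iP_i$ at $+\infty$ (the cured fraction): $$L(P_1,\ldots,P_n)=\prod_{i=1}^n P_i^{B_{h[i]}(x)\mathbf 1(\delta_{[i]}=1)}\Big(1-\sum_{j=1}^{i-1}P_j\Big)^{B_{h[i]}(x)\mathbf 1(\delta_{[i]}=0,\xi_{[i]}\nu_{[i]}=0)}\Big(1-\sum_{j=1}^{n}P_j\Big)^{B_{h[i]}(x)\mathbf 1(\delta_{[i]}=0,\xi_{[i]}\nu_{[i]}=1)}.$$ Then $L$ is maximized by a distribution whose survival function $1-\sum_{j:T_{(j)}\le t}P_j$ equals $$\widehat S_h^c(t\mid x)=1-\widehat F_h^c(t\mid x)=\prod_{i=1}^{n}\left\{1-\frac{\delta_{[i]}B_{h[i]}(x)\mathbf 1(T_{(i)}\le t)}{\sum_{j=i}^{n}B_{h[j]}(x)+\sum_{j=1}^{i-1}B_{h[j]}(x)\mathbf 1(\xi_{[j]}\nu_{[j]}=1)}\right\},$$ i.e. $1-\widehat F_h^c(t\mid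 x)$ is the nonparametric local maximum likelihood estimator of $1-F(t\mid x)$.
   Context: Mixture cure model: $Y\in(0,\infty]$ survival time ($Y=\infty$ iff cured), $\nu=\mathbf 1(Y=\infty)$, censoring time $C$ conditionally independent of $(Y,\nu)$ given the covariate $X$; observed $T=\min(Y,C)$, $\delta=\mathbf 1(Y\le C)$, $\xi$ indicates whether the cure status is known, and $\xi\nu$ is observed. $F(t\mid x)=P(Y\le t\mid X=x)$. Nadaraya–Watson weights: $B_{hi}(x)=K_h(x-X_i)/\sum_{j}K_h(x-X_j)$ with $K_h(u)=K(u/h)/h$ for a kernel $K$ and bandwidth $h$; $B_{h[i]}(x)$ is the weight of the observation with time $T_{(i)}$. Denominators in the product are assumed nonzero. *)

(* Defs.v *)
From HB Require Import structures.
From mathcomp Require Import all_boot all_order all_algebra.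
From mathcomp Require Import all_classical all_reals all_analysis.
Set Implicit Arguments. Unset Strict Implicit. Unset Printing Implicit Defensive.
Import Order.TTheory GRing.Theory Num.Theory.
Local Open Scope ring_scope.

Section Defs.
Variable R : realType.

Definition Kh (K : R -> R) (h u : R) : R := K (u / h) / h.

(* Nadaraya-Watson weight B_{hi}(x) of observation i (observations are
   indexed in increasing order of observed time, so i is also [i]). *)
Definition nw_weight n (K : R -> R) (h : R) (X : 'I_n -> R) (x : R) (i : 'I_n) : R :=
  Kh K h (x - X i) / \sum_(j < n) Kh K h (x - X j).

(* Local likelihood L(P_1,...,P_n); B = weights, delta = censoring indicator,
   cK = xi*nu (cure status known and cured). *)
Definition local_lik n (B : 'I_n -> R) (delta cK : 'I_n -> bool) (P : 'I_n -> R) : R :=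
  \prod_(i < n)
    ( powR (P i) (B i * (delta i)%:R)
    * powR (1 - \sum_(j < n | (j < i)%N) P j) (B i * (~~ delta i && ~~ cK i)%:R)
    * powR (1 - \sum_(j < n) P j) (B i * (~~ delta i && cK i)%:R) ).

Definition feasible n (P : 'I_n -> R) : Prop :=
  (forall i, 0 <= P i) /\ \sum_(j < n) P j <= 1.

Definition risk_denom n (B : 'I_n -> R) (cK : 'I_n -> bool) (i : 'I_n) : R :=
  \sum_(j < n | (i <= j)%N) B j + \sum_(j < n | (j < i)%N) B j * (cK j)%:R.

Definition S_hat n (T : 'I_n -> R) (B : 'I_n -> R) (delta cK : 'I_n -> bool) (t : R) : R :=
  \prod_(i < n)
    (1 - (delta i)%:R * B i * ((T i <= t)%R)%:R / risk_denom B cK i).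

End Defs.

(* Main.v *)
Require Import Defs.
From HB Require Import structures.
From mathcomp Require Import all_boot all_order all_algebra.
From mathcomp Require Import all_classical all_reals all_analysis.
From mathcomp Require Import ring lra.
Import Order.TTheory GRing.Theory Num.Theory.
Local Open Scope ring_scope.

Lemma powRD0 (R : realType) (x r s : R) : 0 <= r -> 0 <= s ->
  powR x (r + s) = powR x r * powR x s.
Proof.
move=> r0 s0; have [/eqP rs0|rs0] := eqVneq (r + s) 0.
  have r00 : r = 0 by lra.
  have s00 : s = 0 by lra.
  by rewrite r00 s00 addr0 powRr0 mulr1.
by rewrite powRD // (negPf rs0).
Qed.

Lemma powR_prod (R : realType) (I : Type) (s : seq I) (P : pred I) (F : I -> R) p :
  (forall i, 0 <= F i) ->
  powR (\prod_(i <- s | P i) F i) p = \prod_(i <- s | P i) powR (F i) p.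
Proof.
move=> F0; elim: s => [|a s IH]; first by rewrite !big_nil powR1.
rewrite !big_cons; case: (P a) => //.
by rewrite powRM // ?IH // prodr_ge0.
Qed.

Lemma powR_sum (R : realType) (I : Type) (s : seq I) (F : I -> R) x :
  (forall i, 0 <= F i) ->
  powR x (\sum_(i <- s) F i) = \prod_(i <- s) powR x (F i).
Proof.
move=> F0; elim: s => [|a s IH]; first by rewrite !big_nil powRr0.
by rewrite !big_cons powRD0 ?IH // sumr_ge0.
Qed.

Lemma big_ord_lt (T : Type) (idx : T) (op : Monoid.law idx) (n i : nat) (G : nat -> T) :
  (i <= n)%N -> \big[op/idx]_(j < n | (j < i)%N) G j = \big[op/idx]_(j < i) G j.
Proof. by move=> hin; rewrite (big_ord_narrow hin). Qed.

Definition Pn {R : realType} (lam : nat -> R) (j : nat) : R :=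
  lam j * \prod_(k < j) (1 - lam k).

Lemma telesc (R : realType) (lam : nat -> R) m :
  1 - \sum_(j < m) Pn lam j = \prod_(k < m) (1 - lam k).
Proof.
elim: m => [|m IH]; first by rewrite !big_ord0 subr0.
rewrite big_ord_recr big_ord_recr /= /Pn -IH; ring.
Qed.

Lemma decomp (R : realType) n (Q : 'I_n -> R) : feasible Q ->
  exists lam : nat -> R, (forall k, 0 <= lam k <= 1) /\ (forall j : 'I_n, Q j = Pn lam j).
Proof.
case=> Q0 Qs.
pose Qn k := oapp Q 0 (insub k : option 'I_n).
have Qn0 k : 0 <= Qn k by rewrite /Qn; case: (insub k) => //=.
have QnE (j : 'I_n) : Qn j = Q j by rewrite /Qn valK.
pose S k := 1 - \sum_(j < k) Qn j.
have SS k : S k.+1 = S k - Qn k by rewrite /S big_ord_recr /= opprD addrA.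
have Sn : 0 <= S n.
  rewrite /S (eq_bigr (fun j : 'I_n => Q j)) ?subr_ge0 // => j _; exact: QnE.
have Smono k : (k <= n)%N -> S n <= S k.
  move=> kn; rewrite /S -(@big_ord_lt R 0 _ n k Qn kn).
  have : \sum_(j < n | (j < k)%N) Qn j <= \sum_(j < n) Qn j.
    rewrite [X in _ <= X](bigID (fun j : 'I_n => (j < k)%N)) /= lerDl sumr_ge0 //.
  by move=> h; rewrite lerD2l lerN2.
pose lam k := if 0 < S k then Qn k / S k else 0.
have Qle k : (k < n)%N -> Qn k <= S k.
  move=> kn; have := Smono k.+1 kn; rewrite SS => hh; rewrite -subr_ge0; exact: le_trans Sn hh.
have Qlam k : (k < n)%N -> Qn k = lam k * S k.
  move=> kn; rewrite /lam; case: ifP => [Spos|Sneg].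
    by rewrite divfK // gt_eqF.
  move/negbT: Sneg; rewrite -leNgt => Sle.
  rewrite mul0r; apply/eqP; rewrite eq_le Qn0 andbT (le_trans (Qle k kn) Sle) //.
have Sprod k : (k <= n)%N -> S k = \prod_(j < k) (1 - lam j).
  elim: k => [|k IH] kn; first by rewrite /S !big_ord0 subr0.
  rewrite SS big_ord_recr /= -IH ?(ltnW kn) // (Qlam k kn); ring.
exists lam; split.
  move=> k; rewrite /lam; case: ifP => Spos; last by rewrite lexx ler01.
  apply/andP; split; first by rewrite divr_ge0 // ltW.
  rewrite ler_pdivrMr // mul1r.
  have [kn|kn] := ltnP k n; first exact: Qle.
  rewrite /Qn insubF /=; first exact: ltW.
  by rewrite ltnNge kn.
move=> j; rewrite -(QnE j) /Pn -(Sprod j (ltnW (ltn_ord j))).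
exact: (Qlam j (ltn_ord j)).
Qed.

Definition alph {R : realType} {n} (B : 'I_n -> R) (delta : 'I_n -> bool) i :=
  B i * (delta i)%:R.
Definition ee {R : realType} {n} (B : 'I_n -> R) (delta cK : 'I_n -> bool) i :=
  B i * (~~ delta i && ~~ cK i)%:R.
Definition ff {R : realType} {n} (B : 'I_n -> R) (delta cK : 'I_n -> bool) i :=
  B i * (~~ delta i && cK i)%:R.
Definition ww {R : realType} {n} (B : 'I_n -> R) (delta cK : 'I_n -> bool) (i k : 'I_n) :=
  (k < i)%N%:R * (alph B delta i + ee B delta cK i) + ff B delta cK i.
Definition bb {R : realType} {n} (B : 'I_n -> R) (delta cK : 'I_n -> bool) (k : 'I_n) :=
  \sum_(i < n) ww B delta cK i k.

Lemma combine {R : realType} n i (g : nat -> R) a e f : (i <= n)%N ->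
  0 <= a -> 0 <= e -> 0 <= f -> (forall k, 0 <= g k) ->
  \prod_(k < i) powR (g k) a * \prod_(k < i) powR (g k) e * \prod_(k < n) powR (g k) f
  = \prod_(k < n) powR (g k) ((k < i)%N%:R * (a + e) + f).
Proof.
move=> hin a0 e0 f0 g0.
rewrite -big_split /= -(@big_ord_lt R 1 _ n i (fun k => powR (g k) a * powR (g k) e) hin).
rewrite big_mkcond -big_split /=; apply: eq_bigr => k _.
case: ifP => _; rewrite ?mul1r ?mul0r ?add0r // !powRD0 // addr_ge0 //.
Qed.

Lemma lik_P {R : realType} n (B : 'I_n -> R) delta cK (lam : nat -> R) :
  (forall i, 0 <= B i) -> (forall k, 0 <= lam k <= 1) ->
  local_lik B delta cK (fun j : 'I_n => Pn lam j)
  = \prod_(k < n) (powR (lam k) (alph B delta k) * powR (1 - lam k) (bb B delta cK k)).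
Proof.
move=> B0 lam01.
have l0 k : 0 <= lam k by case/andP: (lam01 k).
have l1 k : 0 <= 1 - lam k by case/andP: (lam01 k) => _ ?; lra.
have a0 i : 0 <= alph B delta i by rewrite mulr_ge0.
have e0 i : 0 <= ee B delta cK i by rewrite mulr_ge0.
have f0 i : 0 <= ff B delta cK i by rewrite mulr_ge0.
have w0 i k : 0 <= ww B delta cK i k by rewrite addr_ge0 // mulr_ge0 // addr_ge0.
have step (i : 'I_n) :
  powR (Pn lam i) (B i * (delta i)%:R)
  * powR (1 - \sum_(j < n | (j < i)%N) Pn lam j) (B i * (~~ delta i && ~~ cK i)%:R)
  * powR (1 - \sum_(j < n) Pn lam j) (B i * (~~ delta i && cK i)%:R)
  = powR (lam i) (alph B delta i) * \prod_(k < n) powR (1 - lam k) (ww B delta cK i k).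
  have hin : (i <= n)%N by apply: ltnW.
  rewrite (@big_ord_lt R 0 _ n i (Pn lam) hin) !telesc /Pn powRM ?prodr_ge0 // !powR_prod //.
  have := @combine R n i (fun k => 1 - lam k) _ _ _ hin (a0 i) (e0 i) (f0 i) l1.
  rewrite /ww /alph /ee /ff => <-; ring.
rewrite /local_lik (eq_bigr _ (fun i _ => step i)) big_split /= exchange_big /= -big_split /=.
apply: eq_bigr => k _; by rewrite /bb powR_sum.
Qed.

Lemma powR_le1' {R : realType} (x p : R) : 0 <= x <= 1 -> 0 <= p -> powR x p <= 1.
Proof.
case/andP=> x0 x1 p0; rewrite /powR; case: ifP => _.
  by case: (p == 0); rewrite ?lexx ?ler01.
by rewrite expR_le1 mulr_ge0_le0 // ln_le0.
Qed.

Lemma ln_div_le {R : realType} (x y : R) : 0 < x -> 0 < y -> ln x - ln y <= x / y - 1.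
Proof.
move=> x0 y0.
have -> : ln x - ln y = ln (x / y).
  rewrite (@lnM R x (y^-1)) ?posrE ?invr_gt0 // (@lnV R y) ?posrE //.
have := @le_ln1Dx R (x / y - 1); rewrite (addrC 1) subrK; apply.
have : 0 < x / y by rewrite divr_gt0.
lra.
Qed.

Lemma coord_max {R : realType} (a b l m : R) : 0 <= a -> 0 <= b -> 0 <= l <= 1 -> 0 <= m <= 1 ->
  m * (a + b) = a ->
  powR l a * powR (1 - l) b <= powR m a * powR (1 - m) b.
Proof.
move=> a0 b0 /andP[l0 l1] /andP[m0 m1] hm.
have [a00|apos] := eqVneq a 0.
  have [b00|bpos] := eqVneq b 0.
    by rewrite a00 b00 !powRr0.
  have m00 : m = 0.
    apply/eqP; move: hm; rewrite a00 add0r => /eqP; rewrite mulf_eq0 (negPf bpos) orbF //.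
  rewrite a00 m00 !powRr0 subr0 powR1 !mul1r powR_le1' // ?b0 //.
  apply/andP; split; lra.
have [b00|bpos] := eqVneq b 0.
  have m11 : m = 1.
    move: hm; rewrite b00 addr0 => /eqP; rewrite -subr_eq0 -{2}(mul1r a) -mulrBl mulf_eq0 (negPf apos) orbF subr_eq0 => /eqP //.
  rewrite b00 m11 !powRr0 !mulr1 powR1 powR_le1' //.
  apply/andP; split; lra.
have ap : 0 < a by rewrite lt_neqAle eq_sym apos a0.
have bp : 0 < b by rewrite lt_neqAle eq_sym bpos b0.
have mp : 0 < m.
  rewrite lt_neqAle m0 andbT; apply/eqP => mz; rewrite -mz mul0r in hm; lra.
have m1p : m < 1.
  rewrite lt_neqAle m1 andbT; apply/eqP => mz; rewrite mz mul1r in hm; lra.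
have [lz|lnz] := eqVneq l 0.
  by rewrite lz powR0 // mul0r mulr_ge0 // powR_ge0.
have [lo|lnz1] := eqVneq l 1.
  by rewrite lo subrr (@powR0 R b) // mulr0 mulr_ge0 // powR_ge0.
have lp : 0 < l by rewrite lt_neqAle eq_sym lnz l0.
have l1p : l < 1 by rewrite lt_neqAle lnz1 l1.
rewrite /powR !gt_eqF ?subr_gt0 // -!expRD ler_expR.
have H1 := @ln_div_le R l m lp mp.
have H2 : ln (1 - l) - ln (1 - m) <= (1 - l) / (1 - m) - 1.
  by apply: ln_div_le; rewrite subr_gt0.
have Hu : a * (l / m) = l * (a + b).
  rewrite -{1}hm; field; lra.
have Hv : b * ((1 - l) / (1 - m)) = (1 - l) * (a + b).
  have hb : b = (1 - m) * (a + b) by rewrite mulrBl mul1r hm; ring.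
  rewrite {1}hb; field; lra.
have H1' := ler_wpM2l a0 H1.
have H2' := ler_wpM2l b0 H2.
rewrite !mulrBr in H1' H2'.
idtac.
nra.
Qed.

Lemma ab_den {R : realType} n (B : 'I_n -> R) (delta cK : 'I_n -> bool) (k : 'I_n) :
  (forall i, delta i -> ~~ cK i) -> delta k ->
  alph B delta k + bb B delta cK k = risk_denom B cK k.
Proof.
move=> hc dk.
have -> : alph B delta k = \sum_(i | i == k) alph B delta i by rewrite big_pred1_eq.
rewrite /bb /risk_denom.
rewrite !big_mkcond -!big_split /=.
rewrite [X in _ = X + _]big_mkcond [X in _ = _ + X]big_mkcond -big_split /=.
apply: eq_bigr => i _.
have [->|ik] := eqVneq i k.
  rewrite leqnn ltnn /ww /alph /ee /ff dk /= ltnn /=; ring.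

have hci := hc i.
have [ki|ik'|ikE] := ltngtP k i.
- rewrite /ww /alph /ee /ff ki.
  by case: (delta i) (cK i) hci => [] [] /= H; try (by have := H isT); ring.
- rewrite /ww /alph /ee /ff (leq_gtF (ltnW ik')) /=.
  by case: (delta i) (cK i) hci => [] [] /= H; try (by have := H isT); ring.
- by case/eqP: ik; apply: val_inj; rewrite /= ikE.
Qed.

Theorem proposition2 (R : realType) (n : nat)
  (X T : 'I_n -> R) (delta cK : 'I_n -> bool)
  (K : R -> R) (h x : R)
  (hT : forall i j : 'I_n, (i < j)%N -> T i < T j)
  (hcured : forall i, delta i -> ~~ cK i)
  (hh : 0 < h)
  (hB : forall i, 0 <= nw_weight K h X x i)
  (hden : forall i, risk_denom (nw_weight K h X x) cK i != 0) :
  exists P : 'I_n -> R,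
    feasible P /\
    (forall Q : 'I_n -> R, feasible Q ->
       local_lik (nw_weight K h X x) delta cK Q
       <= local_lik (nw_weight K h X x) delta cK P) /\
    (forall t : R,
       1 - \sum_(j < n | T j <= t) P j = S_hat T (nw_weight K h X x) delta cK t).
Proof.
set B := nw_weight K h X x in hB hden *.
set den := risk_denom B cK in hden *.
pose lamstar k := oapp (fun i : 'I_n => (delta i)%:R * B i / den i) 0 (insub k : option 'I_n).
have lsE (i : 'I_n) : lamstar i = (delta i)%:R * B i / den i by rewrite /lamstar valK.
have denB i : B i <= den i.
  rewrite /den /risk_denom (bigD1 i) //= -addrA lerDl addr_ge0 //.
    by rewrite sumr_ge0.
  by rewrite sumr_ge0 // => j _; rewrite mulr_ge0.
have denp i : 0 < den i by rewrite lt_neqAle eq_sym hden (le_trans (hB i)).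
have ls01 k : 0 <= lamstar k <= 1.
  rewrite /lamstar; case: (insub k) => [i|] /=; last by rewrite lexx ler01.
  apply/andP; split; first by apply: divr_ge0; [rewrite mulr_ge0 | apply: ltW].
  rewrite ler_pdivrMr // mul1r.
  by case: (delta i); rewrite ?mul1r ?mul0r // ltW.
exists (fun j : 'I_n => Pn lamstar j); split; [|split].
- split => [i|].
    rewrite /Pn; apply: mulr_ge0; first by case/andP: (ls01 i).
    by apply: prodr_ge0 => k _; case/andP: (ls01 k) => _ ?; rewrite subr_ge0.
  have := @telesc R lamstar n.
  have : 0 <= \prod_(k < n) (1 - lamstar k).
    by rewrite prodr_ge0 // => k _; case/andP: (ls01 k) => _ ?; rewrite subr_ge0.
  move=> ? ?; lra.
- move=> Q /decomp [lam [lam01 hQ]].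
  have -> : Q = (fun j : 'I_n => Pn lam j) by apply/funext => j; exact: hQ.
  rewrite !lik_P //.
  apply: ler_prod => k _; apply/andP; split.
    by rewrite mulr_ge0 // powR_ge0.
  apply: (@coord_max R (alph B delta k) (bb B delta cK k) (lam k) (lamstar k)) => //.
  + by rewrite mulr_ge0.
  + apply: sumr_ge0 => i _; rewrite /ww /alph /ee /ff.
    have Bi := hB i; have z := ler0n R.
    apply: addr_ge0; [apply: mulr_ge0; [exact: z | apply: addr_ge0; apply: mulr_ge0 => //] | apply: mulr_ge0 => //].
  + rewrite lsE; case dk: (delta k).
      by rewrite (@ab_den R n B delta cK k hcured dk) mul1r divfK ?gt_eqF // /alph dk mulr1.
    by rewrite !mul0r /alph dk mulr0.
- move=> t.
  pose m := (\max_(j : 'I_n | (T j <= t)%R) (nat_of_ord j).+1)%N.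
  have Dm (j : 'I_n) : (T j <= t) = (j < m)%N.
    apply/idP/idP => [Tj|jm].
      exact: (leq_bigmax_cond _ Tj).
    apply/negPn/negP => Tj; move: jm; rewrite ltnNge => /negP; apply.
    apply/bigmax_leqP => k Tk.
    rewrite ltnNge; apply/negP => jk.
    move: jk; rewrite leq_eqVlt => /orP[/eqP jk|jk].
      have jk2 : j = k by apply: val_inj.
      by move: Tj; rewrite jk2 Tk.
    by move: Tj; rewrite (le_trans (ltW (hT _ _ jk)) Tk).
  have mn : (m <= n)%N by apply/bigmax_leqP => k _.
  rewrite (eq_bigl (fun j : 'I_n => (j < m)%N)) //.
  rewrite (@big_ord_lt R 0 _ n m (Pn lamstar) mn) telesc /S_hat.
  rewrite -(@big_ord_lt R 1 _ n m (fun k => 1 - lamstar k) mn) big_mkcond /=.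
  apply: eq_bigr => i _; rewrite Dm lsE; case: (i < m)%N; rewrite ?mulr1 //.
  by rewrite mulr0 mul0r subr0.
Qed.
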